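(* Let $A\in\mathcal C$ and let $X$ be a finite independent subset of $A$. Then there is a finite independent subset $Y$ of $A$ with $X\subseteq Y$ such that $A\setminus{\rm desc}(Y)$ is finite.
   Context: Fix an integer $q\ge2$; $T=T_q$ is the digraph whose vertices are finite sequences over $\{0,\ldots,q-1\}$ with edges $(\bar w,\bar wi)$. For a digraph, an $s$-arc ($s\ge0$) from $u_0$ to $u_s$ is a sequence $u_0\ldots u_s$ with each $(u_i,u_{i+1})$ an edge and $u_{i-1}\ne u_{i+1}$ for $0<i<s$; ${\rm desc}(u)$ is the set of vertices reachable from $u$ by some $s$-arc, $s\ge0$ (including $u$), and ${\rm desc}(Y)=\bigcup_{y\in Y}{\rm desc}(y)$. A descendant-closed set $B$ (i.e. ${\rm desc}(b)\subseteq B$ for $b\in B$) is finitely generated if $B={\rm desc}(Z)$ for a finite $Z$. A subset is independent if the descendant sets of any two distinct members are disjoint. $\mathcal C$ is the class of digraphs $A$ such that ${\rm desc}(a)\cong T$ (as induced subdigraph) for every $a\in A$, $A={\rm desc}(Z)$ for some finite $Z$, and ${\rm desc}(a)\cap{\rm desc}(b)$ is finitely generated for all $a,b\in A$. *)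

(* Defs.v *)
From Stdlib Require List.
From mathcomp Require Import all_boot.
Set Implicit Arguments. Unset Strict Implicit. Unset Printing Implicit Defensive.

(* nbwalk E prev u l : the sequence u :: l is a walk along edges of E that
   never immediately backtracks (u_{i-1} <> u_{i+1}); prev is the vertex
   preceding u in the sequence (None if u is the start). *)
Fixpoint nbwalk (V : Type) (E : V -> V -> Prop) (prev : option V) (u : V)
  (l : seq V) : Prop :=
  match l with
  | [::] => True
  | w :: l' =>
      E u w /\ (match prev with Some p => p <> w | None => True end)
      /\ nbwalk E (Some u) w l'
  end.

(* an s-arc from u to v: u :: l with size l = s *)
Definition is_arc (V : Type) (E : V -> V -> Prop) (u v : V) (l : seq V) : Prop :=
  nbwalk E None u l /\ last u l = v.

Definition desc (V : Type) (E : V -> V -> Prop) (u : V) : V -> Prop :=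
  fun v => exists l, is_arc E u v l.

Definition descL (V : Type) (E : V -> V -> Prop) (Z : seq V) : V -> Prop :=
  fun v => exists2 z, List.In z Z & desc E z v.

(* the tree T_q: finite sequences over {0,...,q-1}, edges (w, w i) *)
Definition Tedge (q : nat) (w w' : seq 'I_q) : Prop :=
  exists i : 'I_q, w' = rcons w i.

Definition desc_iso_T (q : nat) (V : Type) (E : V -> V -> Prop) (a : V) : Prop :=
  exists f : {v : V | desc E a v} -> seq 'I_q,
    bijective f /\
    forall x y : {v : V | desc E a v}, E (proj1_sig x) (proj1_sig y) <-> Tedge (f x) (f y).

Definition fin_gen (V : Type) (E : V -> V -> Prop) (B : V -> Prop) : Prop :=
  exists Z : seq V, forall v, B v <-> descL E Z v.

Definition in_classC (q : nat) (V : Type) (E : V -> V -> Prop) : Prop :=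
  (forall a : V, desc_iso_T q E a) /\
  fin_gen E (fun _ => True) /\
  (forall a b : V, fin_gen E (fun v => desc E a v /\ desc E b v)).

Definition independent (V : Type) (E : V -> V -> Prop) (X : seq V) : Prop :=
  forall x y, List.In x X -> List.In y X -> x <> y ->
    forall v, ~ (desc E x v /\ desc E y v).

Definition finite_set (V : Type) (S : V -> Prop) : Prop :=
  exists l : seq V, forall v, S v -> List.In v l.

(* Main.v *)
Require Import Defs.
From mathcomp Require Import all_boot.
From Stdlib Require List.
From Stdlib Require Import Classical ClassicalEpsilon ProofIrrelevance.
From mathcomp Require Import zify.

Set Implicit Arguments. Unset Strict Implicit. Unset Printing Implicit Defensive.

Definition pre (T : Type) (a b : seq T) := exists s, b = a ++ s.

Lemma pre_le (T : Type) (a b c : seq T) :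
  pre a c -> pre b c -> size a <= size b -> pre a b.
Proof.
move=> [s hs] [t ht] hle. exists (drop (size a) b).
have e1 : take (size a) c = a by rewrite hs take_size_cat.
have e2 : take (size a) c = take (size a) b by rewrite ht takel_cat.
by rewrite -{1}(cat_take_drop (size a) b) -e2 e1.
Qed.

Lemma pre_eq (T : Type) (a b c : seq T) :
  pre a c -> pre b c -> size a = size b -> a = b.
Proof.
move=> ha hb e. have [r hr] := pre_le ha hb (eq_leq e).
move: e; rewrite hr size_cat => e.
have -> : r = [::] by apply: size0nil; lia.
by rewrite cats0.
Qed.

Section Walk.
Variables (V : Type) (E : V -> V -> Prop).

Lemma nbwalk_rcons2 prev u l x w :
  nbwalk E prev u (rcons (rcons l x) w) <->
  nbwalk E prev u (rcons l x) /\ E x w /\ last u l <> w.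
Proof.
elim: l prev u => [|a l IH] prev u /=; first tauto.
rewrite IH; tauto.
Qed.

Lemma nbwalk_cat_l prev u l m : nbwalk E prev u (l ++ m) -> nbwalk E prev u l.
Proof.
elim: l prev u => [|a l IH] prev u //= [h1 [h2 h3]].
by split; [|split; [|exact: IH h3]].
Qed.

Lemma desc_refl u : desc E u u.
Proof. by exists [::]. Qed.

Lemma desc_edge z u w : desc E z u -> E u w -> desc E z w.
Proof.
move=> [l [hl hlast]] huw.
case/lastP: l hl hlast => [|l' x] hl hlast.
  rewrite /= in hlast; subst u. exists [:: w]; done.
rewrite last_rcons in hlast; subst x.
case: (classic (last z l' = w)) => hw.
  exists l'; split => //. apply: (@nbwalk_cat_l _ _ _ [:: u]). by rewrite cats1.
exists (rcons (rcons l' u) w); split; last by rewrite last_rcons.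
by apply/nbwalk_rcons2.
Qed.

Lemma descL_in (Y : seq V) x v : List.In x Y -> desc E x v -> descL E Y v.
Proof. by move=> h1 h2; exists x. Qed.

Lemma descL_mono (Y1 Y2 : seq V) v :
  (forall x, List.In x Y1 -> List.In x Y2) -> descL E Y1 v -> descL E Y2 v.
Proof. move=> h [y hy hyv]; exists y => //; exact: h. Qed.

End Walk.

Section Tree.
Variables (q : nat) (V : Type) (E : V -> V -> Prop) (z : V)
  (f : {v : V | desc E z v} -> seq 'I_q) (g : seq 'I_q -> {v : V | desc E z v})
  (fK : cancel f g) (gK : cancel g f)
  (hiso : forall x y : {v : V | desc E z v},
            E (proj1_sig x) (proj1_sig y) <-> Tedge (f x) (f y)).

Definition Fv (v : V) : seq 'I_q :=
  match excluded_middle_informative (desc E z v) with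
  | left H => f (exist _ v H)
  | right _ => [::]
  end.

Definition Gs (s : seq 'I_q) : V := proj1_sig (g s).

Lemma Fv_eq v (H : desc E z v) : Fv v = f (exist _ v H).
Proof.
rewrite /Fv; case: excluded_middle_informative => [H'|nH].
  by rewrite (proof_irrelevance _ H H').
by case: (nH H).
Qed.

Lemma Fv_sig x : Fv (proj1_sig x) = f x.
Proof. by case: x => v H; rewrite (Fv_eq H). Qed.

Lemma Gs_in s : desc E z (Gs s).
Proof. exact: (proj2_sig (g s)). Qed.

Lemma FvGs s : Fv (Gs s) = s.
Proof. by rewrite /Gs Fv_sig gK. Qed.

Lemma GsFv v : desc E z v -> Gs (Fv v) = v.
Proof. by move=> H; rewrite (Fv_eq H) /Gs fK. Qed.

Lemma Fv_inj u v : desc E z u -> desc E z v -> Fv u = Fv v -> u = v.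
Proof. by move=> hu hv e; rewrite -(GsFv hu) -(GsFv hv) e. Qed.

Lemma Fv_edge u v : desc E z u -> desc E z v -> (E u v <-> Tedge (Fv u) (Fv v)).
Proof.
move=> hu hv; rewrite (Fv_eq hu) (Fv_eq hv).
exact: (hiso (exist _ u hu) (exist _ v hv)).
Qed.

Lemma K1 l : forall prev u, desc E z u -> nbwalk E prev u l ->
  desc E z (last u l) /\ pre (Fv u) (Fv (last u l)).
Proof.
elim: l => [|w l IH] prev u hu /=.
  by move=> _; split => //; exists [::]; rewrite cats0.
move=> [huw [_ hl]]. have hw := desc_edge hu huw.
have [i hi] := (Fv_edge hu hw).1 huw.
have [h1 [s hs]] := IH _ _ hw hl. split => //.
by exists (i :: s); rewrite hs hi -cats1 -catA.
Qed.

Lemma K1' u v : desc E z u -> desc E u v -> desc E z v /\ pre (Fv u) (Fv v).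
Proof. by move=> hu [l [hl <-]]; exact: K1 hl. Qed.

Lemma K2 u s : desc E z u -> desc E u (Gs (Fv u ++ s)).
Proof.
move=> hu.
suff [l [hl [hlast _]]] : exists l, nbwalk E None u l /\ last u l = Gs (Fv u ++ s) /\
   forall l' y, l = rcons l' y -> size (Fv (last u l')) < size (Fv y).
  by exists l.
elim/last_ind: s => [|s i [l [hl [hlast hsz]]]].
  exists [::]; split => //; split; first by rewrite cats0 GsFv.
  by move=> l' y; case: l'.
set x := Gs (Fv u ++ s). set w := Gs (Fv u ++ rcons s i).
have hx : desc E z x := Gs_in _. have hw : desc E z w := Gs_in _.
have hxw : E x w by apply/(Fv_edge hx hw); exists i; rewrite !FvGs rcons_cat.
have szw : size (Fv w) = (size (Fv x)).+1.
  by rewrite !FvGs !size_cat size_rcons addnS.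
exists (rcons l w); split; last split.
- case/lastP: l hl hlast hsz => [|l' y] hl hlast hsz.
    rewrite /= in hlast. by rewrite /= hlast.
  apply/nbwalk_rcons2. rewrite last_rcons in hlast.
  split => //; split; first by rewrite hlast.
  move=> heq. have := hsz l' y erefl. rewrite heq hlast -/x szw. lia.
- by rewrite last_rcons.
- move=> l'' y /rcons_inj [<- <-]. rewrite hlast -/x szw. lia.
Qed.

Lemma K2' u v : desc E z u -> desc E z v -> pre (Fv u) (Fv v) -> desc E u v.
Proof. move=> hu hv [s hs]. rewrite -(GsFv hv) hs. exact: K2. Qed.

End Tree.

Fixpoint all_seqs (q : nat) (n : nat) : seq (seq 'I_q) :=
  match n with
  | 0 => [:: [::]]
  | n'.+1 => List.flat_map (fun j => List.map (cons j) (all_seqs q n')) (enum 'I_q)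
  end.

Lemma memIn (T : eqType) (x : T) l : x \in l -> List.In x l.
Proof.
elim: l => //= a l IH; rewrite in_cons => /orP [/eqP ->|h]; [by left|by right; auto].
Qed.

Lemma In_all_seqs q (s : seq 'I_q) : List.In s (all_seqs q (size s)).
Proof.
elim: s => [|i s IH] /=; first by left.
apply/List.in_flat_map; exists i; split; first by apply: memIn; rewrite mem_enum.
exact: List.in_map.
Qed.

Lemma all_seqs_size q n (s : seq 'I_q) : List.In s (all_seqs q n) -> size s = n.
Proof.
elim: n s => [|n IH] s /=; first by case=> // <-.
move/List.in_flat_map => [j [_ /List.in_map_iff [t [<- ht]]]] /=.
by rewrite (IH _ ht).
Qed.

Lemma filter_ex (A : Type) (P : A -> Prop) (l : seq A) :
  exists l', forall x, List.In x l' <-> List.In x l /\ P x.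
Proof.
elim: l => [|a l [l' hl']]; first by exists [::] => x; split => // [[]].
case: (classic (P a)) => ha.
  exists (a :: l') => x /=; rewrite hl'; split.
    by case=> [<-|[]]; auto.
  by case=> [[<-|hx] hp]; auto.
exists l' => x /=; rewrite hl'; split.
  by case; auto.
by case=> [[<-|hx] hp]; auto.
Qed.

Lemma bound (V : Type) (F : V -> nat) (W : seq V) :
  exists N, forall w, List.In w W -> F w < N.
Proof.
elim: W => [|w W [N hN]]; first by exists 0.
exists (maxn N (F w).+1) => x /= [<-|hx]; first lia.
have := hN x hx; lia.
Qed.

Section Main.
Variables (q : nat) (V : Type) (E : V -> V -> Prop)
  (hT : forall a : V, desc_iso_T q E a)
  (hI : forall a b : V, fin_gen E (fun v => desc E a v /\ desc E b v)).

Lemma desc_trans a u v : desc E a u -> desc E u v -> desc E a v.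
Proof.
move=> hu huv. have [f [[g fK gK] hi]] := hT a.
exact: (K1' hi hu huv).1.
Qed.

Lemma fg_union z : forall Y : seq V, exists W,
  forall v, (descL E Y v /\ desc E z v) <-> descL E W v.
Proof.
elim=> [|y Y [W hW]].
  by exists [::] => v; split; [case=> [[? []]] | case=> ? []].
have [Zy hZ] := hI y z. exists (Zy ++ W) => v; split.
  case=> [[x /= [<-|hx] hxv] hzv].
    have [w hw1 hw2] := (hZ v).1 (conj hxv hzv).
    by exists w => //; apply/List.in_app_iff; left.
  have [w hw1 hw2] := (hW v).1 (conj (descL_in hx hxv) hzv).
  by exists w => //; apply/List.in_app_iff; right.
case=> w /List.in_app_iff [hw|hw] hwv.
  have [h1 h2] := (hZ v).2 (descL_in hw hwv).
  by split => //; exists y => //; left.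
have [[y' hy' hy'v] h2] := (hW v).2 (descL_in hw hwv).
by split => //; exists y' => //; right.
Qed.

Lemma step (Y : seq V) z : independent E Y -> exists U, independent E (Y ++ U) /\
  exists L, forall v, desc E z v -> ~ descL E (Y ++ U) v -> List.In v L.
Proof.
move=> hY.
have [f [[g fK gK] hi]] := hT z.
pose F := Fv f. pose G := Gs g.
have [W hW] := fg_union z Y.
have [N hN] := bound (fun w => size (F w)) W.
have [U hU] := filter_ex (fun x => ~ descL E W x) (List.map G (all_seqs q N)).
have hWz w : List.In w W -> desc E z w.
  by move=> hw; case: ((hW w).2 (descL_in hw (desc_refl E w))).
have hUp x : List.In x U -> [/\ desc E z x, size (F x) = N & ~ descL E W x].
  move/hU => [/List.in_map_iff [s [<- hs]] hn]; split => //.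
  - exact: Gs_in.
  - by rewrite /F /G (FvGs gK) (all_seqs_size hs).
have cross x y v : List.In x Y -> List.In y U -> desc E x v -> desc E y v -> False.
  move=> hx hy hxv hyv. have [hyz hsz hnW] := hUp y hy.
  have [hvz hpy] := K1' hi hyz hyv.
  have [w hw hwv] := (hW v).1 (conj (descL_in hx hxv) hvz).
  have hwz := hWz w hw. have [_ hpw] := K1' hi hwz hwv.
  apply: hnW; exists w => //. apply: (K2' fK gK hi hwz hyz).
  apply: (pre_le hpw hpy). have := hN w hw. rewrite -/F hsz. lia.
exists U; split.
  move=> x y /List.in_app_iff hx /List.in_app_iff hy hxy v [hxv hyv].
  case: hx => hx; case: hy => hy.
  - exact: (hY x y hx hy hxy v).
  - exact: (cross x y v).
  - exact: (cross y x v).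
  - have [hxz hsx _] := hUp x hx. have [hyz hsy _] := hUp y hy.
    have [hvz px] := K1' hi hxz hxv. have [_ py] := K1' hi hyz hyv.
    apply: hxy; apply: (Fv_inj fK hxz hyz).
    apply: (pre_eq px py). rewrite -/F hsx hsy //.
exists (List.map G (List.flat_map (all_seqs q) (List.seq 0 N))).
move=> v hvz hnot.
have hlt : size (F v) < N.
  rewrite ltnNge; apply/negP => hge.
  pose s0 := take N (F v). pose u0 := G s0.
  have hu0z : desc E z u0 := Gs_in g _.
  have Fu0 : F u0 = s0 := FvGs gK _.
  have hu0v : desc E u0 v.
    apply: (K2' fK gK hi hu0z hvz); exists (drop N (F v)).
    by rewrite -/F Fu0 cat_take_drop.
  case: (classic (descL E W u0)) => hW0.
    case: hW0 => w hw hwu0. apply: hnot.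
    have hwv := desc_trans hwu0 hu0v.
    have [[y hy hyv] _] := (hW v).2 (descL_in hw hwv).
    by exists y => //; apply/List.in_app_iff; left.
  apply: hnot; exists u0; first (apply/List.in_app_iff; right; apply/hU; split; last exact: hW0).
  - apply: List.in_map. have hs0 : size s0 = N by rewrite size_takel.
    rewrite -[in X in all_seqs q X]hs0. exact: In_all_seqs.
  - exact: hu0v.
rewrite -(GsFv fK hvz). apply: List.in_map. apply/List.in_flat_map.
exists (size (F v)); split; last exact: In_all_seqs.
apply/List.in_seq; lia.
Qed.

Lemma iter (Zs : seq V) : forall Y0, independent E Y0 -> exists Y,
  (forall x, List.In x Y0 -> List.In x Y) /\ independent E Y /\
  exists L, forall v, descL E Zs v -> ~ descL E Y v -> List.In v L.
Proof.
elim: Zs => [|z Zs IH] Y0 hY0.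
  by exists Y0; split => //; split => //; exists [::] => v [? []].
have [U [hind [L1 hL1]]] := step z hY0.
have [Y [hsub [hY [L2 hL2]]]] := IH _ hind.
exists Y; split.
  by move=> x hx; apply: hsub; apply/List.in_app_iff; left.
split => //. exists (L1 ++ L2) => v [z' /= [<-|hz'] hzv] hn; apply/List.in_app_iff.
  left; apply: hL1 => // h; apply: hn; exact: descL_mono hsub h.
by right; apply: hL2 => //; exists z'.
Qed.

End Main.

Theorem lemma3p1 (q : nat) (hq : 2 <= q) (V : Type) (E : V -> V -> Prop)
  (hA : in_classC q E) (X : seq V) (hX : independent E X) :
  exists Y : seq V,
    (forall x, List.In x X -> List.In x Y) /\ independent E Y /\
    finite_set (fun v => ~ descL E Y v).
Proof.
case: hA => [hT [[Z hZ] hI]].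
have [Y [hsub [hY [L hL]]]] := iter hT hI Z hX.
exists Y; split => //; split => //; exists L => v hv.
by apply: hL => //; apply/(hZ v).
Qed.
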